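(* Every admissible sequence $i_n\cdots i_1$ with $i_1=1$ is equivalent to a sequence of one of the following seven types: 1. $(213)^m(21)^n$; 2. $3(213)^m(21)^n$; 3. $13(213)^m(21)^n$; 4. $(312)^m(31)^n$; 5. $2(312)^m(31)^n$; 6. $12(312)^m(31)^n$; 7. $1(21)^n$ (which is equivalent to $1(31)^n$). Here $m\ge0$ and $n\ge1$ in types 1–6, and $n\ge0$ in type 7. Moreover, this list is closed under prepending: if $\alpha$ is of one of these types and $i\in\{1,2,3\}$ differs from the first (leftmost) index of $\alpha$, then $i\alpha$ is equivalent to a sequence of one of these types.
   Context: A finite sequence $s=i_n i_{n-1}\cdots i_1$ with $i_p\in\{1,2,3\}$ (written as a word read from left to right, with $i_1$ the rightmost letter) is called admissible if adjacent indices are distinct ($i_p\neq i_{p+1}$). Admissible sequences are considered up to the equivalence relation generated by replacing any consecutive subword $iji$ by $iki$, where $\{i,j,k\}=\{1,2,3\}$. Powers denote repeated concatenation, e.g. $(21)^2=2121$ and $(213)^0$ is empty. *)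

(* Defs.v *)
From mathcomp Require Import all_boot.
From Stdlib Require Import Relations.
Set Implicit Arguments. Unset Strict Implicit. Unset Printing Implicit Defensive.

(* A sequence i_n ... i_1 is represented as the list [:: i_n; ...; i_1]
   (leftmost letter first); letters are natural numbers 1, 2, 3. *)

Definition letter (i : nat) : bool := (i == 1) || (i == 2) || (i == 3).

Definition admissible (s : seq nat) : Prop :=
  all letter s /\ sorted (fun a b => a != b) s.

Definition triple (i j k : nat) : Prop :=
  [/\ letter i, letter j, letter k & [&& i != j, j != k & i != k]].

Definition move (s t : seq nat) : Prop :=
  exists (a b : seq nat) (i j k : nat),
    triple i j k /\ s = a ++ [:: i; j; i] ++ b /\ t = a ++ [:: i; k; i] ++ b.

Definition seq_equiv (s t : seq nat) : Prop := clos_refl_sym_trans (seq nat) move s t.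

Definition wpow (w : seq nat) (n : nat) : seq nat := flatten (nseq n w).

Definition of_type (t : seq nat) : Prop :=
  (exists m n, 1 <= n /\
     (t = wpow [:: 2; 1; 3] m ++ wpow [:: 2; 1] n \/
      t = 3 :: wpow [:: 2; 1; 3] m ++ wpow [:: 2; 1] n \/
      t = 1 :: 3 :: wpow [:: 2; 1; 3] m ++ wpow [:: 2; 1] n \/
      t = wpow [:: 3; 1; 2] m ++ wpow [:: 3; 1] n \/
      t = 2 :: wpow [:: 3; 1; 2] m ++ wpow [:: 3; 1] n \/
      t = 1 :: 2 :: wpow [:: 3; 1; 2] m ++ wpow [:: 3; 1] n))
  \/ (exists n, t = 1 :: wpow [:: 2; 1] n).
Example ex_move : seq_equiv [:: 1; 2; 1] [:: 1; 3; 1].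
Proof. apply rst_step. exists [::], [::], 1, 2, 3. split; [split; done | done]. Qed.

(* Main.v *)
Require Import Defs.
From Stdlib Require Import Relations.
From mathcomp Require Import all_boot.

Lemma step a i j k b : triple i j k ->
  seq_equiv (a ++ i :: j :: i :: b) (a ++ i :: k :: i :: b).
Proof. move=> H; apply: rst_step; exists a, b, i, j, k; done. Qed.

Lemma cong_pre a s t : seq_equiv s t -> seq_equiv (a ++ s) (a ++ t).
Proof.
elim=> {s t} [s t [a' [b [i [j [k [H [-> ->]]]]]]]| s | s t _ IH | s u t _ IH1 _ IH2].
- apply: rst_step; exists (a ++ a'), b, i, j, k; by rewrite !catA.
- exact: rst_refl.
- exact: rst_sym.
- exact: rst_trans IH2.
Qed.

Arguments cong_pre a {s t}.

Lemma etr s u t : seq_equiv s u -> seq_equiv u t -> seq_equiv s t.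
Proof. exact: rst_trans. Qed.
Arguments etr {s u t}.

Lemma head_equiv s t : seq_equiv s t -> head 0 s = head 0 t.
Proof.
elim=> {s t} [s t [a [b [i [j [k [H [-> ->]]]]]]]| s | s t _ IH | s u t _ IH1 _ IH2] //.
- by case: a.
- by rewrite IH1.
Qed.

Definition G3 y z t := exists m n, 0 < n /\
  (t = wpow [:: y; 1; z] m ++ wpow [:: y; 1] n \/
   t = z :: wpow [:: y; 1; z] m ++ wpow [:: y; 1] n \/
   t = 1 :: z :: wpow [:: y; 1; z] m ++ wpow [:: y; 1] n).

Definition yzok y z := (y == 2) && (z == 3) || (y == 3) && (z == 2).

Lemma L1 y z k Y : triple 1 y z -> triple z 1 y -> triple y z 1 ->
  seq_equiv ([:: y; 1] ++ wpow [:: y; 1; z] k ++ y :: Y)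
            (wpow [:: y; 1; z] k ++ [:: y; 1] ++ y :: Y).
Proof.
move=> T1 T2 T3; elim: k => [|k IH]; first exact: rst_refl.
have [W EW] : exists W, wpow [:: y; 1; z] k ++ y :: Y = y :: W by case: k {IH}; eexists.
have E6 : seq_equiv (y :: 1 :: y :: 1 :: z :: y :: W) (y :: 1 :: z :: y :: 1 :: y :: W).
  apply: rst_trans; first exact: (step [:: y] _ _ z _ T1).
  apply: rst_trans; first exact: (step [:: y; 1] _ _ y _ T2).
  exact: (step [:: y; 1; z] _ _ 1 _ T3).
apply: (rst_trans _ _ _ (y :: 1 :: z :: y :: 1 :: (wpow [:: y; 1; z] k ++ y :: Y))).
  change (seq_equiv (y :: 1 :: y :: 1 :: z :: (wpow [:: y; 1; z] k ++ y :: Y))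
            (y :: 1 :: z :: y :: 1 :: (wpow [:: y; 1; z] k ++ y :: Y))).
  by rewrite EW.
exact (cong_pre [:: y; 1; z] IH).
Qed.

Arguments L1 {y z}.

Lemma hdW y z m n : exists W, wpow [:: y; 1; z] m ++ wpow [:: y; 1] n.+1 = y :: W.
Proof. by case: m; eexists. Qed.

Arguments hdW {y}.

Lemma G y z : yzok y z -> forall alpha i, G3 y z alpha -> letter i -> i != head 0 alpha ->
  exists t, (G3 y z t \/ exists n, t = 1 :: wpow [:: y; 1] n) /\ seq_equiv (i :: alpha) t.
Proof.
move=> Hyz alpha i [m [[|n] [Hn Ha]]] Hi //; clear Hn.
have [T1 T2 T3 [y1 z1 yz]] : [/\ triple 1 y z, triple z 1 y, triple y z 1 &
   [/\ y != 1, z != 1 & y != z]].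
  by case/orP: Hyz => /andP[/eqP-> /eqP->].
have Hi' : i = 1 \/ i = y \/ i = z.
  by case/orP: Hyz => /andP[/eqP-> /eqP->]; move: Hi; rewrite /letter;
     case/orP => [/orP[]|] /eqP ->; auto.
have [W EW] := hdW (y:=y) z m n.
case: Ha => [->|[->|->]].
- rewrite EW /=.
  case: Hi' => [->|[->|->]] Hh; last 2 first.
  + by move: Hh; rewrite /= ?eqxx.
  + exists (z :: wpow [:: y; 1; z] m ++ wpow [:: y; 1] n.+1); split; last by rewrite EW; exact: rst_refl.
    left; exists m, n.+1; auto.
  case: m EW => [|m] EW.
  + exists (1 :: wpow [:: y; 1] n.+1); split; last by rewrite -EW; exact: rst_refl.
    by right; exists n.+1.
  have [W' EW'] := hdW (y:=y) z m n.
  exists (1 :: z :: wpow [:: y; 1; z] m ++ wpow [:: y; 1] n.+2); split.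
    left; exists m, n.+2; auto.
  move: EW => /= [<-]; rewrite -/(wpow _ m) EW'; apply: rst_trans.
    exact: (step [::] _ _ z (z :: y :: W') T1).
  apply: rst_trans.
    exact: (step [:: 1] _ _ y (y :: W') T2).
  apply: rst_trans.
    exact: (step [:: 1; z] _ _ 1 W' T3).
  rewrite -EW'.
  exact: (cong_pre [:: 1; z] (L1 m (1 :: wpow [:: y; 1] n) T1 T2 T3)).
- case: Hi' => [->|[->|->]] Hh; last by move: Hh; rewrite /= ?eqxx.
  + exists (1 :: z :: wpow [:: y; 1; z] m ++ wpow [:: y; 1] n.+1); split; last exact: rst_refl.
    left; exists m, n.+1; auto.
  exists (wpow [:: y; 1; z] m ++ wpow [:: y; 1] n.+2); split.
    left; exists m, n.+2; auto.
  rewrite EW; apply: rst_trans.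
    exact: (step [::] _ _ 1 W T3).
  rewrite -EW.
  exact: (L1 m (1 :: wpow [:: y; 1] n) T1 T2 T3).
- case: Hi' => [->|[->|->]] Hh; first by move: Hh; rewrite /= ?eqxx.
  + exists (wpow [:: y; 1; z] m.+1 ++ wpow [:: y; 1] n.+1); split; last exact: rst_refl.
    left; exists m.+1, n.+1; auto.
  exists (z :: wpow [:: y; 1; z] m ++ wpow [:: y; 1] n.+2); split.
    left; exists m, n.+2; auto.
  rewrite EW; apply: rst_trans.
    exact: (step [::] _ _ y (y :: W) T2).
  apply: rst_trans.
    exact: (step [:: z] _ _ 1 W T3).
  rewrite -EW.
  exact: (cong_pre [:: z] (L1 m (1 :: wpow [:: y; 1] n) T1 T2 T3)).
Qed.

Arguments G {y z}.

Lemma swap7 n : seq_equiv (1 :: wpow [:: 3; 1] n) (1 :: wpow [:: 2; 1] n).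
Proof.
elim: n => [|n IH]; first exact: rst_refl.
apply: rst_trans.
  exact: (step [::] 1 3 2 (wpow [:: 3; 1] n) (And4 _ _ _ _)).
exact: (cong_pre [:: 1; 2] IH).
Qed.

Lemma G3_23 t : G3 2 3 t -> of_type t.
Proof. move=> [m [n [Hn H]]]; left; exists m, n; split => //; tauto. Qed.
Lemma G3_32 t : G3 3 2 t -> of_type t.
Proof. move=> [m [n [Hn H]]]; left; exists m, n; split => //; tauto. Qed.

Lemma part2 (alpha : seq nat) (i : nat) : of_type alpha -> letter i ->
     i != head 0 alpha ->
     exists t, of_type t /\ seq_equiv (i :: alpha) t.
Proof.
case=> [[m [n [Hn H]]]|[n ->]] Hi Hh.
- have [Ha|Ha] : G3 2 3 alpha \/ G3 3 2 alpha.
    case: H => [H|[H|[H|[H|[H|H]]]]]; [left|left|left|right|right|right];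
      exists m, n; split => //; tauto.
  + have [t [[Ht|[k ->]] E]] := G (isT : yzok 2 3) _ _ Ha Hi Hh.
      by exists t; split => //; apply: G3_23.
    exists (1 :: wpow [:: 2; 1] k); split => //; by right; exists k.
  + have [t [[Ht|[k ->]] E]] := G (isT : yzok 3 2) _ _ Ha Hi Hh.
      by exists t; split => //; apply: G3_32.
    exists (1 :: wpow [:: 2; 1] k); split; first by right; exists k.
    exact: etr E (swap7 k).
- move: Hi Hh; rewrite /letter /=; case/orP => [/orP[]|] /eqP -> // _.
  + exists (wpow [:: 2; 1; 3] 0 ++ wpow [:: 2; 1] n.+1); split; last exact: rst_refl.
    left; exists 0, n.+1; split => //; tauto.
  + exists (wpow [:: 3; 1; 2] 0 ++ wpow [:: 3; 1] n.+1); split.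
      left; exists 0, n.+1; split => //; tauto.
    exact: (cong_pre [:: 3] (rst_sym _ _ _ _ (swap7 n))).
Qed.

Theorem mainTheorem16 :
  (forall s : seq nat, admissible s -> last 0 s = 1 ->
     exists t, of_type t /\ seq_equiv s t)
  /\
  (forall (alpha : seq nat) (i : nat), of_type alpha -> letter i ->
     i != head 0 alpha ->
     exists t, of_type t /\ seq_equiv (i :: alpha) t).
Proof.
split; last exact: part2.
elim=> [|x s IH] //; case: s IH => [|y s] IH [Hl Hs] Hlast.
- move: Hlast => /= ->; exists [:: 1]; split; last exact: rst_refl.
  by right; exists 0.
- move: Hl Hs => /= /andP[Hx Hl] /andP[Hxy Hs].
  have [t [Ht E]] := IH (conj Hl Hs) Hlast.
  have Hh : x != head 0 t by rewrite -(head_equiv _ _ E).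
  have [t' [Ht' E']] := part2 _ _ Ht Hx Hh.
  exists t'; split => //.
  exact: etr (cong_pre [:: x] E) E'.
Qed.
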